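(* Let $q\in K(\!(\mathbf{t})\!)^\circ$ satisfy $\operatorname{trop}(q)\ll 1$. Then $q$ lies in every maximal ideal of $K(\!(\mathbf{t})\!)^\circ$.
   Context: $K$ is a field of characteristic zero, $\mathbf{t}=(t_1,\dots,t_m)$, $K(\!(\mathbf{t})\!)=\operatorname{Frac}K[\![\mathbf{t}]\!]$. $V\mathbb{B}[\mathbf{t}]$ is the semiring of subsets of $\mathbb{N}^m$ equal to the vertex set of their Newton polyhedron $\operatorname{conv}(\cdot)+\mathbb{R}^m_{\ge0}$, with $a\oplus b$ = vertices of the Newton polyhedron of $a\cup b$, $a\odot b$ = vertices of that of $a+b$; order $a\le b$ iff $a\oplus b=b$. $V\mathbb{B}(\mathbf{t})$ is its fraction semifield, ordered by $a/b\le c/d$ iff $a\odot d\le b\odot c$. $\operatorname{trop}(f)$ is the vertex set of the Newton polyhedron of $\operatorname{Supp}(f)$, $\operatorname{trop}(f/g)=\operatorname{trop}(f)/\operatorname{trop}(g)$, and $K(\!(\mathbf{t})\!)^\circ=\{q:\operatorname{trop}(q)\le1\}$. For $a\le b$ in $V\mathbb{B}[\mathbf{t}]$, $a\ll b$ ($a$ irrelevant for $b$) means $a\cap b=\emptyset$ as subsets of $\mathbb{N}^m$; for $\frac ab\le\frac cd$ in $V\mathbb{B}(\mathbf{t})$, $\frac ab\ll\frac cd$ means $a\odot d\ll c\odot b$. *)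

(* Defs.v *)
(* Multivariate formal power series K[[t_1..t_m]] are
   coefficient functions on exponent vectors N^m ('I_m -> nat); the fraction
   field K((t)) is given by its universal description (a field F with an
   injective ring morphism from K[[t]] such that every element is a quotient). *)
From HB Require Import structures.
From mathcomp Require Import all_boot all_order all_algebra.
From Stdlib Require Rdefinitions.
From mathcomp Require Import Rstruct.
Set Implicit Arguments. Unset Strict Implicit. Unset Printing Implicit Defensive.
Import Order.TTheory GRing.Theory Num.Theory.
Local Open Scope ring_scope.

Definition mono (m : nat) := 'I_m -> nat.

Definition ps (K : fieldType) (m : nat) := mono m -> K.

Section PowerSeries.
Variables (K : fieldType) (m : nat).

Definition ps_zero : ps K m := fun _ => 0.
Definition ps_one : ps K m := fun a => if [forall i, a i == 0%N] then 1 else 0.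
Definition ps_add (f g : ps K m) : ps K m := fun a => f a + g a.
Definition ps_bnd (c : mono m) : nat := (\max_(i < m) c i).+1.
(* Cauchy product: coefficient of t^c is sum over a <= c of f_a g_(c-a) *)
Definition ps_mul (f g : ps K m) : ps K m := fun c =>
  \sum_(a : {ffun 'I_m -> 'I_(ps_bnd c)} | [forall i, (a i <= c i)%N])
     f (fun i => nat_of_ord (a i)) * g (fun i => (c i - a i)%N).

Definition Supp (f : ps K m) : mono m -> Prop := fun a => f a != 0.
End PowerSeries.

Definition is_frac_field (K : fieldType) (m : nat) (F : fieldType)
    (iota : ps K m -> F) : Prop :=
  [/\ forall f g, iota (ps_add f g) = iota f + iota g,
      forall f g, iota (ps_mul f g) = iota f * iota g,
      iota (@ps_one K m) = 1,
      injective iota &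
      forall q : F, exists f g, iota g != 0 /\ q = iota f / iota g].

Section Tropical.
Variable m : nat.
Definition pt := 'I_m -> Rdefinitions.R.
Definition ptN (a : mono m) : pt := fun i => (a i)%:R.

(* Newton polyhedron conv(S) + R^m_{>=0} *)
Definition newt (S : mono m -> Prop) : pt -> Prop := fun x =>
  exists (s : seq (mono m)) (l : seq Rdefinitions.R),
    [/\ forall j, (j < size s)%N -> S (nth (fun _ => 0%N) s j), size l = size s,
        forall r, r \in l -> 0 <= r, \sum_(r <- l) r = 1 &
        forall i, \sum_(j < size s) l`_j * (nth (fun _ => 0%N) s j i)%:R <= x i].

Definition is_vertex (P : pt -> Prop) (v : pt) : Prop :=
  P v /\ forall (a b : pt) (lam : Rdefinitions.R), P a -> P b -> 0 < lam < 1 ->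
     (forall i, v i = lam * a i + (1 - lam) * b i) -> forall i, a i = v i.

(* elements of VB[t]: subsets of N^m (vertex sets of Newton polyhedra) *)
Definition vb := mono m -> Prop.
Definition vverts (S : vb) : vb := fun a => is_vertex (newt S) (ptN a).
Definition vb_add (a b : vb) : vb := vverts (fun x => a x \/ b x).
Definition vb_mul (a b : vb) : vb :=
  vverts (fun x => exists y z, [/\ a y, b z & forall i, x i = (y i + z i)%N]).
Definition vb_one : vb := fun x => forall i, x i = 0%N.
Definition vb_eq (a b : vb) : Prop := forall x, a x <-> b x.
Definition vb_le (a b : vb) : Prop := vb_eq (vb_add a b) b.
Definition vb_ll (a b : vb) : Prop := vb_le a b /\ forall x, a x -> ~ b x.

(* fraction semifield VB(t): pairs (numerator, denominator) *)
Definition vfrac_le (ab cd : vb * vb) : Prop :=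
  vb_le (vb_mul ab.1 cd.2) (vb_mul ab.2 cd.1).
Definition vfrac_ll (ab cd : vb * vb) : Prop :=
  vfrac_le ab cd /\ vb_ll (vb_mul ab.1 cd.2) (vb_mul cd.1 ab.2).
Definition vfrac_one : vb * vb := (vb_one, vb_one).
End Tropical.

Definition trop (K : fieldType) (m : nat) (f : ps K m) : vb m := vverts (Supp f).

Section Circ.
Variables (K : fieldType) (m : nat) (F : fieldType) (iota : ps K m -> F).

(* q has trop(q) = trop(f)/trop(g) for a representation q = f/g *)
Definition in_circ (q : F) : Prop :=
  exists f g, [/\ iota g != 0, q = iota f / iota g &
                  vfrac_le (trop f, trop g) (vfrac_one m)].

Definition trop_ll_one (q : F) : Prop :=
  exists f g, [/\ iota g != 0, q = iota f / iota g &
                  vfrac_ll (trop f, trop g) (vfrac_one m)].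

Definition circ_ideal (I : F -> Prop) : Prop :=
  [/\ forall x, I x -> in_circ x,
      I 0,
      forall x y, I x -> I y -> I (x - y) &
      forall r x, in_circ r -> I x -> I (r * x)].
Definition circ_proper_ideal (I : F -> Prop) : Prop := circ_ideal I /\ ~ I 1.
Definition circ_maximal_ideal (I : F -> Prop) : Prop :=
  circ_proper_ideal I /\
  forall J, circ_proper_ideal J -> (forall x, I x -> J x) -> forall x, J x -> I x.
End Circ.

(* Main.v *)
Require Import Defs.
From HB Require Import structures.
From mathcomp Require Import all_boot all_order all_algebra.
From mathcomp Require Import Rstruct lra ring zify.
From Stdlib Require Import Classical FunctionalExtensionality PropExtensionality.
Set Implicit Arguments. Unset Strict Implicit. Unset Printing Implicit Defensive.
Import Order.TTheory GRing.Theory Num.Theory.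
Local Open Scope ring_scope.

Notation RR := Rdefinitions.R.

Fixpoint allp {T} (P : T -> Prop) (c : seq T) : Prop :=
  if c is p :: c' then P p /\ allp P c' else True.

Lemma allp_cat T (P : T -> Prop) c d : allp P (c ++ d) <-> allp P c /\ allp P d.
Proof. elim: c => [|p c IH] /=; [tauto|rewrite IH; tauto]. Qed.

Lemma allp_map T U (f : T -> U) (P : U -> Prop) c : allp P (map f c) <-> allp (fun x => P (f x)) c.
Proof. elim: c => [|p c IH] //=; rewrite IH; tauto. Qed.

Lemma allp_impl T (P Q : T -> Prop) c : (forall x, P x -> Q x) -> allp P c -> allp Q c.
Proof. move=> H; elim: c => [|p c IH] //= [? ?]; split; auto. Qed.

Lemma allp_nth T (P : T -> Prop) (d : T) c :
  allp P c <-> forall j, (j < size c)%N -> P (nth d c j).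
Proof.
elim: c => [|p c IH] /=; first by split=> // _ [].
rewrite IH; split.
  by move=> [Hp Hc] [|j] //= Hj; apply: Hc.
by move=> H; split; [apply: (H 0%N)| move=> j Hj; apply: (H j.+1)].
Qed.

Lemma allp_filter T (P : T -> Prop) (a : pred T) c : allp P c -> allp P (filter a c).
Proof. elim: c => [|p c IH] //= [? ?]; case: (a p) => /=; auto. Qed.

Lemma eqle (x y : RR) : x = y -> x <= y. Proof. by move->. Qed.

Lemma allp_unzip1 T (c : seq (RR * T)) : allp (fun p => 0 <= p.1) c -> forall r, r \in unzip1 c -> 0 <= r.
Proof.
elim: c => [|p c IH] //= [H1 H2] r; rewrite in_cons => /orP [/eqP ->//|]; exact: IH.
Qed.

Fixpoint exl {T} (P : T -> Prop) (c : seq T) : Prop :=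
  if c is p :: c' then P p \/ exl P c' else False.

Lemma exl_cat T (P : T -> Prop) c d : exl P (c ++ d) <-> exl P c \/ exl P d.
Proof. elim: c => [|p c IH] /=; [tauto|rewrite IH; tauto]. Qed.

Lemma aux1 (l a b s : RR): 0 < l -> l < 1 -> s = l*a + (1-l)*b -> s <= a -> s <= b -> a = s.
Proof. move=> *; nra. Qed.
Lemma aux2 (l Ua Ub: RR) : 0<l -> l<1 -> 0 <= Ua -> 0 <= Ub -> 0 < Ua \/ 0 < Ub -> 0 < l*Ua + (1-l)*Ub.
Proof. move=> ? ? ? ? [?|?]; nra. Qed.
Lemma aux3 (l Ua Ub Ra Rb a b s : RR) : 0 < l -> l < 1 -> (1-Ua) * s + Ra <= a -> (1-Ub) * s + Rb <= b ->
  s = l * a + (1-l) * b -> l * Ra + (1-l) * Rb <= (l * Ua + (1-l) * Ub) * s.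
Proof.
move=> H1 H2 H3 H4 H5.
have h1 := ler_wpM2l (ltW H1) H3.
have h2 : 0 <= 1 - l by rewrite subr_ge0 ltW.
have h3 := ler_wpM2l h2 H4.
lra.
Qed.

Section Cmb.
Variable m : nat.
Implicit Types (S T : mono m -> Prop).

Definition cmb S x := exists c : seq (RR * mono m),
  [/\ allp (fun p => 0 <= p.1 /\ S p.2) c, \sum_(p <- c) p.1 = 1 &
      forall i, \sum_(p <- c) p.1 * (p.2 i)%:R <= x i].

Lemma newt_cmb S : newt S = cmb S.
Proof.
apply: functional_extensionality => x; apply: propositional_extensionality.
split.
  move=> [s [l [Hs Hl Hpos Hsum Hx]]].
  exists (zip l s); split.
  - apply/(allp_nth _ (0, fun _ => 0%N)) => j; rewrite size_zip Hl minnn => Hj.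
    rewrite nth_zip //=; split; last exact: Hs.
    by apply: Hpos; rewrite mem_nth // Hl.
  - by rewrite -Hsum -[in RHS](@unzip1_zip _ _ l s) ?Hl // big_map.
  - move=> i; apply: le_trans (Hx i).
    rewrite (big_nth (0, fun _ => 0%N)) size_zip Hl minnn big_mkord.
    by apply/eqle/eq_bigr => j _; rewrite nth_zip.
move=> [c [Hc Hsum Hx]].
exists (unzip2 c), (unzip1 c); split.
- move=> j; rewrite size_map => Hj; rewrite (nth_map (0, fun _ => 0%N)) //.
  by move/(allp_nth _ (0, fun _ => 0%N)): Hc => /(_ j Hj) [].
- by rewrite !size_map.
- by apply: allp_unzip1; apply: allp_impl Hc => p [].
- by rewrite big_map.
- move=> i; apply: le_trans (Hx i).
  rewrite (big_nth (0, fun _ => 0%N)) big_mkord size_map.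
  apply/eqle/eq_bigr => j _.
  by rewrite (nth_map (0, fun _ => 0%N)) // (nth_map (0, fun _ => 0%N)).
Qed.

Lemma cmb_sub S T x : (forall a, S a -> T a) -> cmb S x -> cmb T x.
Proof.
move=> H [c [Hc H1 H2]]; exists c; split => //.
by apply: allp_impl Hc => p [? /H].
Qed.

Lemma cmb_le S x y : cmb S x -> (forall i, x i <= y i) -> cmb S y.
Proof. move=> [c [Hc H1 H2]] H; exists c; split => // i; exact: le_trans (H2 i) (H i). Qed.

Lemma cmb_pt S a : S a -> cmb S (ptN a).
Proof.
move=> Ha; exists [:: (1, a)]; split => /=; first by split.
  by rewrite big_seq1.
by move=> i; rewrite big_seq1 mul1r.
Qed.

Lemma cmb_ex S x : cmb S x -> exists a, S a.
Proof.
move=> [[|p c] [Hc H1 H2]]; first by move: H1; rewrite big_nil => /eqP; rewrite eq_sym oner_eq0.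
by exists p.2; case: Hc => [[]].
Qed.

Lemma cmb_bind_gen S U (f : mono m -> pt m) (c : seq (RR * mono m)) :
  allp (fun p => 0 <= p.1 /\ S p.2) c -> (forall s, S s -> cmb U (f s)) ->
  exists d : seq (RR * mono m), [/\ allp (fun p => 0 <= p.1 /\ U p.2) d,
    \sum_(p <- d) p.1 = \sum_(p <- c) p.1 &
    forall i, \sum_(p <- d) p.1 * (p.2 i)%:R <= \sum_(p <- c) p.1 * f p.2 i].
Proof.
move=> Hc Hf; elim: c Hc => [|p c IH] /=.
  by move=> _; exists [::]; split => // i; rewrite !big_nil.
move=> [[Hp0 HpS] /IH [d [Hd1 Hd2 Hd3]]].
have [e [He1 He2 He3]] := Hf _ HpS.
exists (map (fun q => (p.1 * q.1, q.2)) e ++ d); split.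
- apply/allp_cat; split => //; apply/allp_map; apply: allp_impl He1 => q [Hq1 Hq2] /=.
  by split => //; apply: mulr_ge0.
- by rewrite big_cat big_map big_cons -mulr_sumr He2 mulr1 Hd2.
- move=> i; rewrite big_cat big_map big_cons; apply: lerD => //.
  under eq_bigr => q _ do rewrite /= -mulrA.
  by rewrite -mulr_sumr; apply: ler_wpM2l.
Qed.

Lemma cmb_bind S U (f : mono m -> pt m) x0 x :
  (forall s, S s -> cmb U (f s)) ->
  (forall c : seq (RR * mono m), allp (fun p => 0 <= p.1 /\ S p.2) c -> \sum_(p <- c) p.1 = 1 ->
     (forall i, \sum_(p <- c) p.1 * (p.2 i)%:R <= x0 i) ->
     forall i, \sum_(p <- c) p.1 * f p.2 i <= x i) ->
  cmb S x0 -> cmb U x.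
Proof.
move=> Hf Hx [c [Hc H1 H2]].
have [d [Hd1 Hd2 Hd3]] := cmb_bind_gen Hc Hf.
exists d; split => //; first by rewrite Hd2.
by move=> i; apply: le_trans (Hd3 i) _; apply: Hx.
Qed.

Lemma cmb_closure S T x : (forall a, S a -> cmb T (ptN a)) -> cmb S x -> cmb T x.
Proof. by move=> H; apply: (cmb_bind (f := @ptN m)) => // c _ _ H2. Qed.

Definition msum S T : mono m -> Prop := fun v =>
  exists s t, [/\ S s, T t & forall i, v i = (s i + t i)%N].

Lemma cmb_minkowski S T x y : cmb S x -> cmb T y -> cmb (msum S T) (fun i => x i + y i).
Proof.
move=> Hx [e [He1 He2 He3]].
apply: (@cmb_bind S (msum S T) (fun s i => (s i)%:R + y i) x (fun i => x i + y i) _ _ Hx).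
  move=> s Hs; exists (map (fun q => (q.1, fun i => (s i + q.2 i)%N)) e); split.
  - apply/allp_map; apply: allp_impl He1 => q [Hq1 Hq2] /=; split => //.
    by exists s, q.2; split.
  - by rewrite big_map.
  - move=> i; rewrite big_map /=.
    under eq_bigr => q _ do rewrite natrD mulrDr.
    by rewrite big_split /= -mulr_suml He2 mul1r lerD2l.
move=> c Hc H1 H2 i.
under eq_bigr => q _ do rewrite mulrDr.
by rewrite big_split /= -mulr_suml H1 mul1r lerD2r.
Qed.

Lemma sumw_ge0 (X : Type) (P : pred (RR * X)) (c : seq (RR * X)) : allp (fun p => 0 <= p.1) c -> 0 <= \sum_(p <- c | P p) p.1.
Proof.
elim: c => [|p c IH] /=; first by rewrite big_nil.
move=> [H1 H2]; rewrite big_cons; case: ifP => _; last exact: IH.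
by apply: addr_ge0 => //; exact: IH.
Qed.

Lemma sumw0 (X : Type) (P : pred (RR * X)) (c : seq (RR * X)) (F : RR * X -> RR) :
  allp (fun p => 0 <= p.1) c -> \sum_(p <- c | P p) p.1 = 0 -> \sum_(p <- c | P p) p.1 * F p = 0.
Proof.
elim: c => [|p c IH] /=; first by move=> _ _; rewrite big_nil.
move=> [H1 H2]; rewrite !big_cons; case: ifP => _; last exact: IH.
have H3 := sumw_ge0 P H2.
move=> H; have Hp : p.1 = 0 by lra.
by rewrite Hp mul0r add0r; apply: IH => //; lra.
Qed.

Lemma vertex_in S v : is_vertex (cmb S) (ptN v) -> exists p, S p /\ forall i, p i = v i.
Proof.
move=> [[c [Hc H1 H2]] HV].
pose y : pt m := fun i => \sum_(p <- c) p.1 * (p.2 i)%:R.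
have Hy : cmb S y by exists c; split.
have Hyv : forall i, y i = (v i)%:R.
  have Hb : cmb S (fun i => 2 * (v i)%:R - y i).
    apply: cmb_le Hy _ => i; have := H2 i; rewrite /ptN /y; lra.
  have := HV y _ (1/2) Hy Hb; rewrite /ptN => H; apply: H.
    by apply/andP; split; lra.
  by move=> i; lra.
have Hpos := allp_impl (fun p (H : 0 <= p.1 /\ S p.2) => proj1 H) Hc.
suff : forall (c : seq (RR * mono m)) t, allp (fun p => 0 <= p.1 /\ S p.2) c ->
   \sum_(p <- c) p.1 = t -> 0 < t -> (forall i, \sum_(p <- c) p.1 * (p.2 i)%:R = t * (v i)%:R) ->
   exists p, S p /\ forall i, p i = v i.
  move=> /(_ c 1 Hc H1 ltr01); apply => i; rewrite mul1r -Hyv //.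
elim => [|p d IH] t /=.
  by move=> _; rewrite big_nil => <-; rewrite ltxx.
move=> [[Hp0 HpS] Hd]; rewrite big_cons => Ht tpos Hsum.
have Hdpos := allp_impl (fun p (H : 0 <= p.1 /\ S p.2) => proj1 H) Hd.
have Ht' := sumw_ge0 xpredT Hdpos.
have [t'0|t'pos] := eqVneq (\sum_(q <- d) q.1) 0.
  have Hz := sumw0 (fun q => (q.2 _)%:R) Hdpos t'0.
  exists p.2; split => // i; have := Hsum i; rewrite big_cons.
  have -> : \sum_(q <- d) q.1 * (q.2 i)%:R = 0 by have := sumw0 (fun q => (q.2 i)%:R) Hdpos t'0.
  rewrite addr0 => Hi; have Hw : p.1 = t by rewrite t'0 addr0 in Ht.
  rewrite Hw in Hi; move/(mulfI (lt0r_neq0 tpos)): Hi => /eqP; rewrite eqr_nat => /eqP //.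
have t'gt : 0 < \sum_(q <- d) q.1 by rewrite lt0r t'pos.
have [w0|wpos] := eqVneq p.1 0.
  apply: (IH t) => //; first by rewrite -Ht w0 add0r.
  by move=> i; have := Hsum i; rewrite big_cons w0 mul0r add0r.
set t' := \sum_(q <- d) q.1 in Ht t'pos t'gt.
have wgt : 0 < p.1 by rewrite lt0r wpos.
pose b : pt m := fun i => (\sum_(q <- d) q.1 * (q.2 i)%:R) / t'.
have Hb : cmb S b.
  exists (map (fun q => (q.1 / t', q.2)) d); split.
  - apply/allp_map; apply: allp_impl Hd => q [Hq1 Hq2] /=; split => //.
    by apply: divr_ge0 => //; apply: ltW.
  - by rewrite big_map -mulr_suml divff.
  - move=> i; rewrite big_map /b mulr_suml; apply/eqle/eq_bigr => q _ /=.
    by rewrite mulrAC.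
have := HV (ptN p.2) b (p.1 / t) (cmb_pt HpS) Hb.
have Hlam : 0 < p.1 / t < 1.
  apply/andP; split; first by apply: divr_gt0.
  by rewrite ltr_pdivrMr // mul1r -Ht ltrDl.
move=> /(_ Hlam) H.
exists p.2; split => // i.
suff : (p.2 i)%:R = (v i)%:R :> RR by move/eqP; rewrite eqr_nat => /eqP.
apply: H => j; rewrite /ptN /b.
have := Hsum j; rewrite big_cons => Hj.
have -> : \sum_(q <- d) q.1 * (q.2 j)%:R = t * (v j)%:R - p.1 * (p.2 j)%:R by rewrite -Hj; ring.
rewrite -Ht; field.
by apply/andP; split; [rewrite gt_eqF|rewrite gt_eqF // ltr_wpDr].
Qed.

Definition FB S := exists M : seq (mono m), allp S M /\
  forall x : mono m, S x -> exl (fun y : mono m => forall i, (y i <= x i)%N) M.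

Lemma FB_union (J : eqType) (L : seq J) (Tj : J -> mono m -> Prop) :
  (forall j, j \in L -> FB (Tj j)) ->
  exists M : seq (mono m), allp (fun y => exists j, j \in L /\ Tj j y) M /\
    forall j (x : mono m), j \in L -> Tj j x -> exl (fun y : mono m => forall i, (y i <= x i)%N) M.
Proof.
elim: L => [|j L IH] H; first by exists [::]; split => // j x.
have [|M1 [HM1 HM2]] := IH.
  by move=> j' Hj'; apply: H; rewrite in_cons Hj' orbT.
have [|M0 [HM01 HM02]] := H j; first by rewrite in_cons eqxx.
exists (M0 ++ M1); split.
  apply/allp_cat; split.
    by apply: allp_impl HM01 => y Hy; exists j; rewrite in_cons eqxx.
  by apply: allp_impl HM1 => y [j' [Hj' Hy]]; exists j'; rewrite in_cons Hj' orbT.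
move=> j' x; rewrite in_cons => /orP [/eqP ->|Hj'] Hx; apply/exl_cat.
  by left; apply: HM02.
by right; apply: HM2 Hj' Hx.
Qed.

Definition agree (D : {set 'I_m}) S := forall x y : mono m, S x -> S y -> forall i, i \notin D -> x i = y i.

Lemma FB_step (D : {set 'I_m}) S :
  (forall i, i \in D -> forall T, agree (D :\ i) T -> FB T) -> agree D S -> FB S.
Proof.
move=> IH HS.
have [[s0 Hs0]|Hne] := classic (exists s0, S s0); last first.
  by exists [::]; split => // x Hx; apply: Hne; exists x.
pose B := (\max_(j < m) s0 j).+1.
pose L := [seq (i, k) | i <- enum D, k <- iota 0 B].
pose Tj (p : 'I_m * nat) := fun x => S x /\ x p.1 = p.2.
have [|M [HM1 HM2]] := @FB_union _ L Tj.
  move=> [i k] /allpairsP [[i' k'] [Hi' Hk' [-> ->]]] /=.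
  rewrite mem_enum in Hi'.
  apply: (IH i') => // x y [Sx Hx] [Sy Hy] j; rewrite in_setD1 negb_and negbK.
  case/orP => [/eqP -> /=|Hj]; first by rewrite Hx Hy.
  exact: HS.
exists (s0 :: M); split.
  by split => //; apply: allp_impl HM1 => y [j [_ []]].
move=> x Hx /=.
have [Hle|Hnle] := boolP [forall i, s0 i <= x i]%N.
  by left => i; move/forallP: Hle.
right; move: Hnle; rewrite negb_forall => /existsP [i]; rewrite -ltnNge => Hi.
have HiD : i \in D.
  apply/negPn/negP => HiD; have := HS x s0 Hx Hs0 i HiD; lia.
apply: (HM2 (i, x i)); last by split.
apply/allpairsP; exists (i, x i); split => //=; first by rewrite mem_enum.
have HB : (x i < B)%N.
  rewrite /B ltnS; apply: leq_trans (ltnW Hi) _.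
  exact: (leq_bigmax_cond (F := fun j : 'I_m => s0 j) i).
change (x i \in iota 0 B); by rewrite mem_iota add0n HB.
Qed.

Lemma dickson_gen n (D : {set 'I_m}) S : (#|D| <= n)%N -> agree D S -> FB S.
Proof.
elim: n D S => [|n IH] D S HD; apply: FB_step => i Hi T HT.
  by move: HD; rewrite leqn0 cards_eq0 => /eqP HD; rewrite HD in_set0 in Hi.
apply: (IH (D :\ i)) => //.
by move: HD; rewrite (cardsD1 i D) Hi.
Qed.

Lemma dickson S : FB S.
Proof.
apply: (@dickson_gen m setT) => [|x y _ _ i]; first by rewrite cardsT card_ord.
by rewrite in_setT.
Qed.

Definition eqm (a b : mono m) : bool := [forall i, a i == b i].

Lemma eqmP a b : reflect (a = b) (eqm a b).
Proof.
apply: (iffP forallP) => [H|->]; last by move=> i.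
by apply: functional_extensionality => i; apply/eqP.
Qed.

Lemma sum_split (c : seq (RR * mono m)) s i :
  \sum_(p <- c) p.1 * (p.2 i)%:R =
  (\sum_(p <- c | eqm p.2 s) p.1) * (s i)%:R + \sum_(p <- c | ~~ eqm p.2 s) p.1 * (p.2 i)%:R.
Proof.
rewrite (bigID (fun p => eqm p.2 s)) /= mulr_suml; congr (_ + _).
by apply: eq_bigr => p /eqmP ->.
Qed.

Lemma sumw_split (c : seq (RR * mono m)) s :
  \sum_(p <- c) p.1 = \sum_(p <- c | eqm p.2 s) p.1 + \sum_(p <- c | ~~ eqm p.2 s) p.1.
Proof. by rewrite (bigID (fun p => eqm p.2 s)). Qed.

Lemma allp_scale_filter S s (k : RR) (c : seq (RR * mono m)) :
  0 <= k -> allp (fun p => 0 <= p.1 /\ S p.2) c ->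
  allp (fun p => 0 <= p.1 /\ (S p.2 /\ p.2 <> s))
    (map (fun p => (k * p.1, p.2)) (filter (predC (fun p : RR * mono m => eqm p.2 s)) c)).
Proof.
move=> Hk; elim: c => [|p c IH] //= [[H1 H2] H3].
case: ifP => HP /=; last exact: IH.
split; last exact: IH.
split; first by apply: mulr_ge0.
by split => // Hps; move: HP; rewrite Hps; case: eqmP.
Qed.

Lemma sum_scale_filter s (k : RR) (c : seq (RR * mono m)) (F : mono m -> RR) :
  \sum_(p <- map (fun p => (k * p.1, p.2)) (filter (predC (fun p : RR * mono m => eqm p.2 s)) c)) p.1 * F p.2
  = k * \sum_(p <- c | ~~ eqm p.2 s) p.1 * F p.2.
Proof. by rewrite big_map big_filter mulr_sumr; apply: eq_bigr => p _ /=; rewrite mulrA. Qed.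

Lemma sumw_scale_filter s (k : RR) (c : seq (RR * mono m)) :
  \sum_(p <- map (fun p => (k * p.1, p.2)) (filter (predC (fun p : RR * mono m => eqm p.2 s)) c)) p.1
  = k * \sum_(p <- c | ~~ eqm p.2 s) p.1.
Proof. by rewrite big_map big_filter mulr_sumr. Qed.

Lemma remove_nonvertex S s : S s -> ~ is_vertex (cmb S) (ptN s) ->
  cmb (fun a => S a /\ a <> s) (ptN s).
Proof.
move=> Hs Hnv; apply: NNPP => Hgoal; apply: Hnv; split; first exact: cmb_pt.
move=> a b l Ha Hb Hl Hsab; apply: NNPP => Hne; apply: Hgoal.
move: Ha Hb => [ca [Hca1 Hca2 Hca3]] [cb [Hcb1 Hcb2 Hcb3]].
have Hl0 : 0 < l by case/andP: Hl.
have Hl1 : l < 1 by case/andP: Hl.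
set P := fun p : RR * mono m => eqm p.2 s.
have Hpa := allp_impl (fun p (H : 0 <= p.1 /\ S p.2) => proj1 H) Hca1.
have Hpb := allp_impl (fun p (H : 0 <= p.1 /\ S p.2) => proj1 H) Hcb1.
set Ua := \sum_(p <- ca | ~~ eqm p.2 s) p.1.
set Ub := \sum_(p <- cb | ~~ eqm p.2 s) p.1.
have Ua0 : 0 <= Ua by apply: sumw_ge0.
have Ub0 : 0 <= Ub by apply: sumw_ge0.
have HWa : \sum_(p <- ca | eqm p.2 s) p.1 = 1 - Ua by rewrite -Hca2 (sumw_split ca s) addrK.
have HWb : \sum_(p <- cb | eqm p.2 s) p.1 = 1 - Ub by rewrite -Hcb2 (sumw_split cb s) addrK.
have Ha i : (1 - Ua) * (s i)%:R + \sum_(p <- ca | ~~ eqm p.2 s) p.1 * (p.2 i)%:R <= a i.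
  by rewrite -HWa -sum_split.
have Hb i : (1 - Ub) * (s i)%:R + \sum_(p <- cb | ~~ eqm p.2 s) p.1 * (p.2 i)%:R <= b i.
  by rewrite -HWb -sum_split.
have [[Ua_0 Ub_0]|HU] := classic (Ua = 0 /\ Ub = 0).
  exfalso; apply: Hne => i.
  have Ra := sumw0 (fun p => (p.2 i)%:R) Hpa Ua_0.
  have Rb := sumw0 (fun p => (p.2 i)%:R) Hpb Ub_0.
  have := Ha i; have := Hb i; rewrite Ra Rb Ua_0 Ub_0 !subr0 !mul1r !addr0.
  have := Hsab i; rewrite /ptN => Hi Hbi Hai.
  exact: aux1 Hl0 Hl1 Hi Hai Hbi.
set U := l * Ua + (1 - l) * Ub.
have Upos : 0 < U.
  have : Ua <> 0 \/ Ub <> 0 by apply: NNPP => H; apply: HU; split; apply: NNPP => H'; apply: H; tauto.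
  move=> HH; apply: aux2 => //; case: HH => H; [left|right]; rewrite lt0r; apply/andP; split => //; exact/eqP.
exists (map (fun p => (l / U * p.1, p.2)) (filter (predC P) ca) ++
        map (fun p => ((1 - l) / U * p.1, p.2)) (filter (predC P) cb)); split.
- apply/allp_cat; split; apply: allp_scale_filter => //; apply: divr_ge0; try apply: ltW => //.
  by rewrite subr_gt0.
- rewrite big_cat !sumw_scale_filter -/Ua -/Ub.
  by rewrite /= /U in Upos *; field; rewrite gt_eqF.
- move=> i; rewrite big_cat.
  rewrite (sum_scale_filter s (l / U) ca (fun a => (a i)%:R)).
  rewrite (sum_scale_filter s ((1 - l) / U) cb (fun a => (a i)%:R)).
  set Ra := \sum_(p <- ca | _) _.
  set Rb := \sum_(p <- cb | _) _.
  have Hai := Ha i; have Hbi := Hb i; have Hsi := Hsab i; rewrite /ptN in Hsi *.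
  rewrite -/Ra in Hai; rewrite -/Rb in Hbi.
  have H := aux3 Hl0 Hl1 Hai Hbi Hsi; rewrite -/U in H.
  rewrite /=.
  have Hd : forall (u x y a1 b1 : RR), a1 / u * x + b1 / u * y = (a1 * x + b1 * y) / u.
    by move=> u x y a1 b1; rewrite mulrDl (mulrAC a1) (mulrAC b1).
  rewrite Hd.
  by rewrite ler_pdivrMr // [_ * U]mulrC.
Qed.

Definition inM (M : seq (mono m)) (a : mono m) := exl (fun y => y = a) M.

Lemma inM_filter M s a : inM (filter (fun y => ~~ eqm y s) M) a <-> inM M a /\ a <> s.
Proof.
elim: M => [|y M IH] /=; first by rewrite /inM /=; tauto.
case: eqmP => [->|Hys] /=; rewrite /inM /= -/(inM _ _) IH.
  split; first by move=> [? ?]; split => //; right.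
  by move=> [[<-|?] ?] //; split.
split; first by move=> [<-|[? ?]]; split => //; [left|right].
by move=> [[<-|?] ?]; [left|right].
Qed.

Lemma size_filter_lt M s : inM M s -> (size (filter (fun y => ~~ eqm y s) M) < size M)%N.
Proof.
elim: M => [|y M IH] //= [->|H].
  rewrite (introT (eqmP s s) erefl) /= ltnS; rewrite size_filter; exact: count_size.
by case: (eqm y s) => /=; [apply: ltnW; apply: IH|rewrite ltnS; apply: IH].
Qed.

Lemma reduce n (M : seq (mono m)) : (size M <= n)%N -> forall x,
  cmb (inM M) x -> cmb (fun a => is_vertex (cmb (inM M)) (ptN a)) x.
Proof.
elim: n M => [|n IH] M HM x.
  by case: M HM => // _ /cmb_ex [a []].
have [Hall|Hnall] := classic (forall a, inM M a -> is_vertex (cmb (inM M)) (ptN a)).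
  by apply: cmb_sub.
have [s Hs] := not_all_ex_not _ _ Hnall.
have [Hs1 Hs2] := imply_to_and _ _ Hs.
set M' := filter (fun y => ~~ eqm y s) M.
have Heq : cmb (inM M) = cmb (inM M').
  apply: functional_extensionality => y; apply: propositional_extensionality; split.
    apply: cmb_closure => a Ha.
    have [->|Has] := classic (a = s).
      apply: cmb_sub (remove_nonvertex Hs1 Hs2) => b Hb; exact/inM_filter.
    by apply: cmb_pt; apply/inM_filter.
  by apply: cmb_sub => a /inM_filter [].
rewrite Heq; apply: IH.
by have := size_filter_lt Hs1; rewrite -/M'; move: HM; lia.
Qed.

Lemma allp_inM S M a : allp S M -> inM M a -> S a.
Proof. elim: M => [|y M IH] //= [Hy HM] [<-|H] //; exact: IH. Qed.

Lemma exl_inM (P : mono m -> Prop) M : exl P M -> exists y, inM M y /\ P y.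
Proof.
elim: M => [|y M IH] //= [H|/IH [z [Hz Pz]]]; first by exists y; split => //; left.
by exists z; split => //; right.
Qed.

Lemma cmb_verts S : cmb S = cmb (fun a => is_vertex (cmb S) (ptN a)).
Proof.
have [M [HM1 HM2]] := dickson S.
have Heq : cmb S = cmb (inM M).
  apply: functional_extensionality => y; apply: propositional_extensionality; split.
    apply: cmb_closure => a Ha; have [z [Hz Hza]] := exl_inM (HM2 a Ha).
    by apply: cmb_le (cmb_pt Hz) _ => i; rewrite /ptN ler_nat.
  by apply: cmb_sub => a; apply: allp_inM.
rewrite Heq; apply: functional_extensionality => y; apply: propositional_extensionality; split.
  exact: (reduce (leqnn _)).
by apply: cmb_closure => a [].
Qed.
End Cmb.


Section Series.
Variables (K : fieldType) (m : nat).
Implicit Types (u w : ps K m).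

Lemma mul_supp u w v : ps_mul u w v != 0 ->
  exists y z, [/\ u y != 0, w z != 0 & forall i, v i = (y i + z i)%N].
Proof.
move=> Hne; apply: NNPP => Hno; move: Hne; rewrite /ps_mul big1 ?eqxx // => a Ha.
have [Hu|Hu] := eqVneq (u (fun i => nat_of_ord (a i))) 0; first by rewrite Hu mul0r.
have [Hw|Hw] := eqVneq (w (fun i => (v i - a i)%N)) 0; first by rewrite Hw mulr0.
exfalso; apply: Hno; exists (fun i => nat_of_ord (a i)), (fun i => (v i - a i)%N); split => // i.
by move/forallP: Ha => /(_ i) Hi; rewrite subnKC.
Qed.

Lemma mul_unique u w v y0 z0 :
  (forall y z, u y != 0 -> w z != 0 -> (forall i, v i = (y i + z i)%N) -> y = y0) ->
  (forall i, v i = (y0 i + z0 i)%N) ->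
  ps_mul u w v = u y0 * w z0.
Proof.
move=> Huniq Hv.
have Hb : forall i, (y0 i < ps_bnd v)%N.
  move=> i; rewrite /ps_bnd ltnS; apply: leq_trans (_ : (v i <= _)%N).
    by rewrite Hv leq_addr.
  exact: (leq_bigmax_cond (F := fun j : 'I_m => v j) i).
pose A0 : {ffun 'I_m -> 'I_(ps_bnd v)} := [ffun i => Ordinal (Hb i)].
have HA0 : (fun i => nat_of_ord (A0 i)) = y0.
  by apply: functional_extensionality => i; rewrite ffunE.
rewrite /ps_mul (bigD1 A0) /=; last first.
  by apply/forallP => i; rewrite ffunE /= Hv leq_addr.
rewrite big1 ?addr0.
  rewrite HA0; congr (_ * _); congr w; apply: functional_extensionality => i.
  by rewrite ffunE /= Hv addKn.
move=> a /andP [Ha HaA0].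
have [Hu|Hu] := eqVneq (u (fun i => nat_of_ord (a i))) 0; first by rewrite Hu mul0r.
have [Hw|Hw] := eqVneq (w (fun i => (v i - a i)%N)) 0; first by rewrite Hw mulr0.
exfalso; move/eqP: HaA0; apply.
have := Huniq _ _ Hu Hw; rewrite -HA0 => H.
apply/ffunP => i; apply/val_inj.
have := f_equal (fun f => f i) (H _) => /= ->//.
by move=> j; move/forallP: Ha => /(_ j) Hj; rewrite subnKC.
Qed.

Lemma vertex_msum_supp u w v :
  is_vertex (cmb (msum (Supp u) (Supp w))) (ptN v) -> Supp (ps_mul u w) v.
Proof.
move=> HV; have [p [[y0 [z0 [Hy0 Hz0 Hp]]] Hpv]] := vertex_in HV.
have Hv : forall i, v i = (y0 i + z0 i)%N by move=> i; rewrite -Hpv Hp.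
rewrite /Supp (mul_unique (y0 := y0) (z0 := z0)) ?mulf_neq0 //.
move=> y z Hy Hz Hyz; apply: functional_extensionality => i.
have Ha : cmb (msum (Supp u) (Supp w)) (ptN (fun j => (y j + z0 j)%N)).
  by apply: cmb_pt; exists y, z0; split.
have Hb : cmb (msum (Supp u) (Supp w)) (ptN (fun j => (y0 j + z j)%N)).
  by apply: cmb_pt; exists y0, z; split.
have := (proj2 HV) _ _ (1/2) Ha Hb.
have Hl : 0 < (1/2 : RR) < 1 by apply/andP; split; lra.
move=> /(_ Hl) H.
have : (ptN (fun j => (y j + z0 j)%N) i = ptN v i).
  apply: H => j; rewrite /ptN.
  have := Hv j; have := Hyz j => H1 H2.
  have E : ((v j)%:R : RR) = (y j)%:R + (z j)%:R by rewrite H1 natrD.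
  have E2 : ((v j)%:R : RR) = (y0 j)%:R + (z0 j)%:R by rewrite {1}H2 natrD.
  rewrite !natrD; lra.
rewrite /ptN => /eqP; rewrite eqr_nat Hv eqn_add2r => /eqP //.
Qed.

Lemma cmb_mul u w x y : cmb (Supp u) x -> cmb (Supp w) y ->
  cmb (Supp (ps_mul u w)) (fun i => x i + y i).
Proof.
move=> Hx Hy; have := cmb_minkowski Hx Hy.
rewrite cmb_verts; apply: cmb_sub => a; exact: vertex_msum_supp.
Qed.
End Series.


Section Trop.
Variable m : nat.
Implicit Types (S T : mono m -> Prop).

Definition vc S : mono m -> Prop := fun a => is_vertex (cmb S) (ptN a).

Lemma vverts_vc S : vverts S = vc S.
Proof. by rewrite /vverts /vc newt_cmb. Qed.

Lemma cmb_vc S : cmb (vc S) = cmb S.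
Proof. by rewrite /vc -cmb_verts. Qed.

Lemma vc_idem S : vc (vc S) = vc S.
Proof. by rewrite {1}/vc cmb_vc. Qed.

Lemma vb_mul_one (X : vb m) : vb_mul X (@vb_one m) = vverts X.
Proof.
rewrite /vb_mul; congr vverts; apply: functional_extensionality => x.
apply: propositional_extensionality; split.
  move=> [y [z [Hy Hz Hx]]]; have -> : x = y by apply: functional_extensionality => i; rewrite Hx Hz addn0.
  done.
by move=> Hx; exists x, (fun _ => 0%N); split => // i; rewrite addn0.
Qed.

Lemma vb_one_mul (X : vb m) : vb_mul (@vb_one m) X = vverts X.
Proof.
rewrite /vb_mul; congr vverts; apply: functional_extensionality => x.
apply: propositional_extensionality; split.
  move=> [y [z [Hy Hz Hx]]]; have -> : x = z by apply: functional_extensionality => i; rewrite Hx Hy add0n.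
  done.
by move=> Hx; exists (fun _ => 0%N), x; split.
Qed.

Lemma cmb_union_vc S T : cmb (fun x => vc S x \/ vc T x) = cmb (fun x => S x \/ T x).
Proof.
apply: functional_extensionality => y; apply: propositional_extensionality; split.
  apply: cmb_closure => a [[Ha _]|[Ha _]].
    by apply: cmb_sub Ha => b Hb; left.
  by apply: cmb_sub Ha => b Hb; right.
apply: cmb_closure => a [Ha|Ha].
  by have := cmb_pt Ha; rewrite -cmb_vc; apply: cmb_sub => b Hb; left.
by have := cmb_pt Ha; rewrite -cmb_vc; apply: cmb_sub => b Hb; right.
Qed.
End Trop.

Section Circ2.
Variables (K : fieldType) (m : nat).

Definition le (f g : ps K m) := forall x, Supp f x -> cmb (Supp g) (ptN x).

Lemma trop_vc (f : ps K m) : trop f = vc (Supp f).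
Proof. by rewrite /trop vverts_vc. Qed.

Lemma cmb_trop (f : ps K m) : cmb (trop f) = cmb (Supp f).
Proof. by rewrite trop_vc cmb_vc. Qed.

Lemma le_iff (f g : ps K m) : vfrac_le (trop f, trop g) (vfrac_one m) <-> le f g.
Proof.
rewrite /vfrac_le /vfrac_one /= !vb_mul_one /vb_le /vb_eq /vb_add.
rewrite !vverts_vc !trop_vc !vc_idem.
split.
  move=> H x Hx.
  have E : vc (fun x => vc (Supp f) x \/ vc (Supp g) x) = vc (Supp g).
    by apply: functional_extensionality => y; apply: propositional_extensionality.
  have : cmb (fun x => Supp f x \/ Supp g x) (ptN x) by apply: cmb_pt; left.
  by rewrite -cmb_union_vc -cmb_vc E cmb_vc.
move=> H x; rewrite /vc cmb_union_vc.
have -> : cmb (fun x => Supp f x \/ Supp g x) = cmb (Supp g); last by [].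
apply: functional_extensionality => y; apply: propositional_extensionality; split.
  by apply: cmb_closure => a [Ha|Ha]; [apply: H|apply: cmb_pt].
by apply: cmb_sub => a Ha; right.
Qed.

Lemma ll_iff (f g : ps K m) : vfrac_ll (trop f, trop g) (vfrac_one m) ->
  le f g /\ forall x, vc (Supp f) x -> ~ vc (Supp g) x.
Proof.
move=> [/le_iff H1 [_ H2]]; split => // x.
by move: (H2 x); rewrite /= vb_mul_one vb_one_mul !trop_vc !vverts_vc !vc_idem.
Qed.
End Circ2.


Section Main.
Variables (K : fieldType) (m : nat) (F : fieldType) (iota : ps K m -> F).
Hypothesis hF : is_frac_field iota.
Implicit Types (f g : ps K m).

Definition ps_neg (f : ps K m) : ps K m := fun a => - f a.

Lemma iota_add f g : iota (ps_add f g) = iota f + iota g. Proof. by case: hF. Qed.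
Lemma iota_mul f g : iota (ps_mul f g) = iota f * iota g. Proof. by case: hF. Qed.
Lemma iota_one : iota (@ps_one K m) = 1. Proof. by case: hF. Qed.
Lemma iota_inj : injective iota. Proof. by case: hF. Qed.

Lemma iota_zero : iota (@ps_zero K m) = 0.
Proof.
have E : ps_add (@ps_zero K m) (@ps_zero K m) = (@ps_zero K m).
  by apply: functional_extensionality => a; rewrite /ps_add /ps_zero addr0.
have := iota_add (@ps_zero K m) (@ps_zero K m); rewrite E => H.
by apply: (@addrI _ (iota (@ps_zero K m))); rewrite -H addr0.
Qed.

Lemma iota_neg f : iota (ps_neg f) = - iota f.
Proof.
have E : ps_add f (ps_neg f) = (@ps_zero K m).
  by apply: functional_extensionality => a; rewrite /ps_add /ps_neg /ps_zero subrr.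
have := iota_add f (ps_neg f); rewrite E iota_zero => H.
by apply/eqP; rewrite -addr_eq0 addrC -H.
Qed.

Lemma supp_ex f : iota f != 0 -> exists x, Supp f x.
Proof.
move=> Hf; apply: NNPP => H; move: Hf; apply/negP; rewrite negbK.
have -> : f = (@ps_zero K m); last by rewrite iota_zero.
apply: functional_extensionality => a; apply/eqP; apply: NNPP => Ha; apply: H.
by exists a; exact/negP.
Qed.

Lemma iota_neq0 f x : Supp f x -> iota f != 0.
Proof.
move=> Hx; apply/eqP => H; move: Hx; rewrite -iota_zero in H.
by rewrite /Supp (iota_inj H) /ps_zero eqxx.
Qed.

Lemma le_refl f : le f f. Proof. by move=> x Hx; apply: cmb_pt. Qed.

Lemma le_zero g : le (@ps_zero K m) g. Proof. by move=> x; rewrite /Supp /ps_zero eqxx. Qed.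

Lemma le_mul f1 g1 f2 g2 : le f1 g1 -> le f2 g2 -> le (ps_mul f1 f2) (ps_mul g1 g2).
Proof.
move=> H1 H2 x /mul_supp [y [z [Hy Hz Hx]]].
apply: cmb_le (cmb_mul (H1 _ Hy) (H2 _ Hz)) _ => i.
by rewrite /ptN Hx natrD.
Qed.

Lemma le_add f1 f2 g : le f1 g -> le f2 g -> le (ps_add f1 f2) g.
Proof.
move=> H1 H2 x Hx.
have [Hf1|Hf1] := eqVneq (f1 x) 0.
  by apply: H2; move: Hx; rewrite /Supp /ps_add Hf1 add0r.
exact: H1.
Qed.

Lemma le_neg f g : le f g -> le (ps_neg f) g.
Proof. by move=> H x Hx; apply: H; move: Hx; rewrite /Supp /ps_neg oppr_eq0. Qed.

Definition circ (x : F) := exists f g, [/\ iota g != 0, x = iota f / iota g & le f g].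

Lemma circE x : in_circ iota x <-> circ x.
Proof.
split; move=> [f [g [H1 H2 H3]]]; exists f, g; split => //; exact/le_iff.
Qed.

Lemma circ_add x y : circ x -> circ y -> circ (x + y).
Proof.
move=> [f1 [g1 [H1 -> H3]]] [f2 [g2 [H4 -> H6]]].
exists (ps_add (ps_mul f1 g2) (ps_mul g1 f2)), (ps_mul g1 g2); split.
- by rewrite iota_mul mulf_neq0.
- rewrite iota_add !iota_mul; field; exact/andP.
- by apply: le_add; [apply: le_mul => //; apply: le_refl|apply: le_mul => //; apply: le_refl].
Qed.

Lemma circ_opp x : circ x -> circ (- x).
Proof.
move=> [f [g [H1 -> H3]]]; exists (ps_neg f), g; split => //.
  by rewrite iota_neg mulNr.
exact: le_neg.
Qed.

Lemma circ_mul x y : circ x -> circ y -> circ (x * y).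
Proof.
move=> [f1 [g1 [H1 -> H3]]] [f2 [g2 [H4 -> H6]]].
exists (ps_mul f1 f2), (ps_mul g1 g2); split.
- by rewrite iota_mul mulf_neq0.
- rewrite !iota_mul; field; exact/andP.
- exact: le_mul.
Qed.

Lemma circ0 : circ 0.
Proof.
exists (@ps_zero K m), (@ps_one K m); split; first by rewrite iota_one oner_neq0.
  by rewrite iota_zero mul0r.
exact: le_zero.
Qed.

Lemma circ1 : circ 1.
Proof.
exists (@ps_one K m), (@ps_one K m); split; first by rewrite iota_one oner_neq0.
  by rewrite iota_one divr1.
exact: le_refl.
Qed.

Lemma circ_sub x y : circ x -> circ y -> circ (x - y).
Proof. by move=> Hx Hy; apply: circ_add => //; apply: circ_opp. Qed.

End Main.


Lemma unit_lemma (K : fieldType) (m : nat) (F : fieldType) (iota : ps K m -> F)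
  (hF : is_frac_field iota) (r : F) (f g : ps K m) :
  circ iota r -> iota g != 0 -> le f g ->
  (forall x, vc (Supp f) x -> ~ vc (Supp g) x) ->
  exists u, circ iota u /\ u * (1 - r * (iota f / iota g)) = 1.
Proof.
move=> [a [b [Hb -> Hab]]] Hg Hfg Hdisj.
set bg := ps_mul b g; set af := ps_mul a f; set h := ps_add bg (ps_neg af).
have Hv : forall v, vc (Supp bg) v -> Supp h v.
  move=> v HV; have [p [Hp Hpv]] := vertex_in HV.
  have Hbgv : Supp bg v.
    by have -> : v = p by apply: functional_extensionality => i; rewrite Hpv.
  suff Haf : af v = 0 by rewrite /Supp /h /ps_add /ps_neg Haf oppr0 addr0.
  apply/eqP; apply: NNPP => /negP Hne.
  have [y [z [Hy Hz Hyz]]] := mul_supp Hne.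
  have Cy := Hab _ Hy; have Cz := Hfg _ Hz.
  have Hext : forall z1 z2 l, cmb (Supp g) z1 -> cmb (Supp g) z2 -> 0 < l < 1 ->
      (forall i, ptN z i = l * z1 i + (1 - l) * z2 i) -> forall i, z1 i = ptN z i.
    move=> z1 z2 l H1 H2 Hl Hzz i.
    have A := cmb_mul Cy H1; have B := cmb_mul Cy H2.
    have := (proj2 HV) _ _ l A B Hl.
    have E : forall j, ptN v j = ptN y j + ptN z j by move=> j; rewrite /ptN Hyz natrD.
    have : forall j, ptN v j = l * (ptN y j + z1 j) + (1 - l) * (ptN y j + z2 j).
      by move=> j; rewrite E Hzz; ring.
    move=> H3 /(_ H3 i); rewrite E => H4.
    by apply: (@addrI _ (ptN y i)).
  apply: (Hdisj z).
    split; first exact: cmb_pt.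
    move=> z1 z2 l H1 H2; apply: Hext.
      exact: cmb_closure Hfg H1.
    exact: cmb_closure Hfg H2.
  by split.
have Hbg0 : iota bg != 0 by rewrite iota_mul // mulf_neq0.
have [x Hx] := supp_ex hF Hbg0.
have := cmb_pt Hx; rewrite -cmb_vc => /cmb_ex [v Hvv].
have Hh0 : iota h != 0 := iota_neq0 hF (Hv _ Hvv).
exists (iota bg / iota h); split.
  exists bg, h; split => //.
  by move=> y Hy; have := cmb_pt Hy; rewrite -cmb_vc; apply: cmb_sub; exact: Hv.
have Eh : iota h = iota b * iota g - iota a * iota f.
  by rewrite /h iota_add // iota_neg // !iota_mul.
rewrite Eh in Hh0 *; rewrite /bg iota_mul //.
field.
by rewrite Hb Hg Hh0.
Qed.

Unset Implicit Arguments.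

Theorem lemma4p7 (K : fieldType) (m : nat) (F : fieldType) (iota : ps K m -> F)
  (hK : [pchar K] =i pred0) (hF : is_frac_field iota) (q : F)
  (hq : in_circ iota q) (hll : trop_ll_one iota q) :
  forall I : F -> Prop, circ_maximal_ideal iota I -> I q.
Proof.
move=> I [[[HI1 HI0 HIsub HImul] HI1n] Hmax].
have [f [g [Hg Hq Hll]]] := hll.
have [Hfg Hdisj] := ll_iff Hll.
have HqC : circ iota q by apply/circE.
pose J x := exists y r, [/\ I y, in_circ iota r & x = y + r * q].
have HJ : circ_ideal iota J.
  split.
  - move=> x [y [r [Hy Hr ->]]]; apply/circE; apply: (circ_add hF) => //.
      by apply/circE; apply: HI1.
    by apply: (circ_mul hF) => //; apply/circE.
  - exists 0, 0; split => //; last by rewrite mul0r addr0.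
    by apply/circE; apply: (circ0 hF).
  - move=> x1 x2 [y1 [r1 [Hy1 Hr1 ->]]] [y2 [r2 [Hy2 Hr2 ->]]].
    exists (y1 - y2), (r1 - r2); split; [exact: HIsub| |ring].
    by apply/circE; apply: (circ_sub hF) => //; apply/circE.
  - move=> s x Hs [y [r [Hy Hr ->]]]; exists (s * y), (s * r); split; [exact: HImul| |ring].
    by apply/circE; apply: (circ_mul hF) => //; apply/circE.
have HIJ : forall x, I x -> J x.
  move=> x Hx; exists x, 0; split => //; last by rewrite mul0r addr0.
  by apply/circE; apply: (circ0 hF).
have HJq : J q.
  exists 0, 1; split => //; last by rewrite mul1r add0r.
  by apply/circE; apply: (circ1 hF).
have [HJ1|HJ1] := classic (J 1); last by apply: (Hmax J (conj HJ HJ1) HIJ q HJq).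
exfalso; move: HJ1 => [y [r [Hy Hr E]]].
have Ey : y = 1 - r * q by rewrite E addrK.
have [u [Hu Hu1]] := unit_lemma hF (proj1 (circE iota r) Hr) Hg Hfg Hdisj.
apply: HI1n; rewrite -Hu1 -Hq -Ey; apply: HImul => //; exact/circE.
Qed.
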